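(* Let $\mathcal{A}$ be the B\''uchi automaton over $\{a,b\}$ with states $q_0$ (initial) and $q_1$ (accepting) and transitions $q_0\xrightarrow{a}q_1$, $q_1\xrightarrow{b}q_0$, so that $\mathfrak{L}(\mathcal{A})=\{(ab)^\omega\}$. Then there is no automaton $\mathcal{C}$ with $\mathfrak{J}(\mathcal{C})=\mathfrak{J}_{\exists\boxplus}(\mathcal{A})$. In particular, $(ab)^\omega\in\mathfrak{J}_{\exists\boxplus}(\mathcal{A})$ while the word $aba^2b^2a^3b^3\cdots$ (which satisfies $\sim$ with $(ab)^\omega$) is not in $\mathfrak{J}_{\exists\boxplus}(\mathcal{A})$.
   Context: Automata are nondeterministic B\''uchi automata over infinite words. For $w\in\Sigma^\omega$, $\Psi(w)\in\mathbb{N}_\infty^\Sigma$ gives the number of occurrences of each letter ($\infty$ if infinite); $w\sim w'$ iff $\Psi(w)=\Psi(w')$; $\mathfrak{J}(\mathcal{C})=\{w:\exists w'\sim w,\ w'\in\mathfrak{L}(\mathcal{C})\}$. For $k\ge1$, $w\sim_{k\boxplus}w'$ means $w=x_1x_2\cdots$, $w'=y_1y_2\cdots$ with $|x_i|=|y_i|=k$ and each $y_i$ a permutation of $x_i$. $\mathfrak{J}_{\exists\boxplus}(\mathcal{A})=\{w:\exists k\ge1\ \exists w'\sim_{k\boxplus}w,\ w'\in\mathfrak{L}(\mathcal{A})\}$. *)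

(* Defs.v *)
From HB Require Import structures.
From mathcomp Require Import all_boot.
Set Implicit Arguments. Unset Strict Implicit. Unset Printing Implicit Defensive.

Definition oword (Sigma : Type) := nat -> Sigma.

Unset Implicit Arguments.
Record automaton (Sigma : finType) := Automaton {
  state : finType;
  init : pred state;
  trans : state -> Sigma -> state -> bool;
  acc : pred state }.
Set Implicit Arguments.
Arguments state {Sigma}. Arguments init {Sigma}. Arguments trans {Sigma}. Arguments acc {Sigma}.

Definition accepting_run (Sigma : finType) (A : automaton Sigma)
    (w : oword Sigma) (r : nat -> state A) : Prop :=
  init A (r 0) /\
  (forall i, trans A (r i) (w i) (r i.+1)) /\
  (forall n, exists m, n <= m /\ acc A (r m)).

Definition lang (Sigma : finType) (A : automaton Sigma) (w : oword Sigma) : Prop :=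
  exists r, @accepting_run Sigma A w r.

Definition occ (Sigma : finType) (w : oword Sigma) (c : Sigma) (n : nat) : nat :=
  count (fun i => w i == c) (iota 0 n).

(** [Psi_is w c x] : the Parikh value Psi(w)(c) in N_infty equals [x]
    ([None] encodes infinity). *)
Definition Psi_is (Sigma : finType) (w : oword Sigma) (c : Sigma)
    (x : option nat) : Prop :=
  match x with
  | Some k => exists N, forall n, N <= n -> occ w c n = k
  | None => forall k, exists n, k < occ w c n
  end.

Definition psi_equiv (Sigma : finType) (w w' : oword Sigma) : Prop :=
  forall c x, Psi_is w c x <-> Psi_is w' c x.

Definition block (Sigma : finType) (k : nat) (w : oword Sigma) (i : nat) : seq Sigma :=
  mkseq (fun j => w (i * k + j)) k.

Definition block_perm (Sigma : finType) (k : nat) (w w' : oword Sigma) : Prop :=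
  forall i, perm_eq (block k w i) (block k w' i).

Definition J (Sigma : finType) (C : automaton Sigma) (w : oword Sigma) : Prop :=
  exists w', psi_equiv w w' /\ lang C w'.

Definition Jbox (Sigma : finType) (A : automaton Sigma) (w : oword Sigma) : Prop :=
  exists k, 0 < k /\ exists w', block_perm k w w' /\ lang A w'.

Inductive letter := La | Lb.
Definition letter_to_bool (x : letter) : bool := if x is La then true else false.
Definition bool_to_letter (x : bool) : letter := if x then La else Lb.
Lemma letter_boolK : cancel letter_to_bool bool_to_letter.
Proof. by case. Qed.
HB.instance Definition _ := Equality.copy letter (can_type letter_boolK).
HB.instance Definition _ := Choice.copy letter (can_type letter_boolK).
HB.instance Definition _ := Countable.copy letter (can_type letter_boolK).
HB.instance Definition _ := Finite.copy letter (can_type letter_boolK).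

(** The automaton A: states q0 = false (initial), q1 = true (accepting);
    transitions q0 -a-> q1 and q1 -b-> q0. *)
Definition A_ab : automaton letter :=
  @Automaton letter bool
    (fun q => q == false)
    (fun q x q' => ((q == false) && (x == La) && (q' == true))
                || ((q == true) && (x == Lb) && (q' == false)))
    (fun q => q == true).

Definition ab_omega : oword letter := fun i => if odd i then Lb else La.

(** a b a^2 b^2 a^3 b^3 ... : concatenation of the blocks a^n b^n, n >= 1
    (the first i+1 blocks have total length > i, so position i is covered). *)
Definition w_bad : oword letter := fun i =>
  nth La (flatten [seq nseq n La ++ nseq n Lb | n <- iota 1 i.+1]) i.

(* Main.v *)
Require Import Defs.
From mathcomp Require Import all_boot.
From mathcomp Require Import zify.
From Stdlib Require Import FunctionalExtensionality.

Lemma occS (w : oword letter) c n : occ w c n.+1 = occ w c n + (w n == c).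
Proof. by rewrite /occ -addn1 iotaD count_cat /= addn0. Qed.

Lemma occ_mono (w : oword letter) c n m : n <= m -> occ w c n <= occ w c m.
Proof.
move=> /subnKC <-; elim: (m - n) => [|d IH]; first by rewrite addn0.
rewrite addnS occS; lia.
Qed.

Lemma unbounded (w : oword letter) c :
  (forall m, exists p, m <= p /\ w p = c) -> forall k, exists n, k < occ w c n.
Proof.
move=> H; elim=> [|k [n Hn]].
  have [p [_ Hp]] := H 0; exists p.+1; rewrite occS Hp eqxx; lia.
have [p [Hp Hwp]] := H n; exists p.+1; rewrite occS Hwp eqxx.
have := @occ_mono w c _ _ Hp; lia.
Qed.

Lemma psi_unb (w w' : oword letter) :
  (forall c k, exists n, k < occ w c n) -> (forall c k, exists n, k < occ w' c n) ->
  psi_equiv w w'.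
Proof.
have key : forall (v : oword letter) c k, (forall k, exists n, k < occ v c n) ->
   ~ Psi_is v c (Some k).
  move=> v c k U [N HN]; have [n Hn] := U k.
  have := @occ_mono v c _ _ (leq_maxl n N); have := HN (maxn n N) (leq_maxr n N); lia.
move=> U U' c [k|]; split => H.
- by case: (key _ _ k (U c)).
- by case: (key _ _ k (U' c)).
- exact: U'.
- exact: U.
Qed.

Lemma ab_unb c k : exists n, k < occ ab_omega c n.
Proof.
apply: unbounded => m; case: c.
  exists m.*2; split; first lia; by rewrite /ab_omega odd_double.
exists m.*2.+1; split; first lia; by rewrite /ab_omega /= odd_double.
Qed.

Definition blk (j : nat) : seq letter := nseq j La ++ nseq j Lb.
Definition F (a : nat) := flatten [seq blk j | j <- iota 1 a].

Lemma size_F a : size (F a) = a * (a + 1).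
Proof.
elim: a => [//|a IH].
have E : iota 1 (a + 1) = iota 1 a ++ [:: 1 + a] by rewrite iotaD.
rewrite addn1 add1n in E.
rewrite /F E map_cat flatten_cat size_cat -/(F a) IH /= cats0.
rewrite /blk size_cat !size_nseq. rewrite /= size_nseq; nia.
Qed.

Lemma w_bad_at n t : 0 < n -> t < n.*2 ->
  w_bad (n * (n - 1) + t) = if t < n then La else Lb.
Proof.
move=> n0 tn; rewrite /w_bad.
set M := (n * (n - 1) + t).+1.
have -> : M = (n - 1) + (1 + (M - n)) by rewrite /M; lia.
rewrite iotaD iotaD map_cat flatten_cat -/(F (n - 1)) nth_cat size_F.
have -> : n * (n - 1) + t < (n - 1) * (n - 1 + 1) = false by apply/negbTE; nia.
have -> : n * (n - 1) + t - (n - 1) * (n - 1 + 1) = t by nia.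
rewrite map_cat flatten_cat.
have -> : 1 + (n - 1) = n by lia.
rewrite /= cats0 nth_cat size_cat !size_nseq.
have -> : t < n + n by lia.
rewrite nth_cat size_nseq; case: ifP => tn'; rewrite nth_nseq ?tn' //.
by have -> : t - n < n by lia.
Qed.

Lemma wbad_unb c k : exists n, k < occ w_bad c n.
Proof.
apply: unbounded => m; case: c.
  exists ((m.+1) * (m.+1 - 1) + 0); split; first nia.
  by rewrite w_bad_at //; lia.
exists ((m.+1) * (m.+1 - 1) + m.+1); split; first nia.
by rewrite w_bad_at ?ltnn //; lia.
Qed.

Lemma lang_ab w : lang A_ab w <-> w = ab_omega.
Proof.
split.
  move=> [r [H0 [Ht _]]].
  have Hr : forall i, r i = odd i.
    elim=> [|i IH]; first by move/eqP: H0.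
    move: (Ht i); rewrite /= IH; case: (odd i) => /=; case: (w i) => //=;
    by case: (r i.+1).
  apply: functional_extensionality => i.
  move: (Ht i); rewrite /= !Hr /ab_omega /=; case: (odd i) => /=; case: (w i) => //.
move=> ->; exists (fun i => odd i); split; first by [].
split.
  move=> i; rewrite /= /ab_omega; by case: (odd i).
move=> n; exists n.*2.+1; split; first lia; by rewrite /= odd_double.
Qed.

Lemma not_Jbox_bad : ~ Jbox A_ab w_bad.
Proof.
move=> [k [k0 [w' [Hb /lang_ab Hw]]]]; subst w'.
set n := 3 * k.
set i := (n * (n - 1) + k - 1) %/ k.
have D := leq_divM (n * (n - 1) + k - 1) k.
have C := ltn_ceil (n * (n - 1) + k - 1) k0.
rewrite -/i in D C.
have [Hi1 Hi2] : n * (n - 1) <= i * k /\ i * k < n * (n - 1) + k.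
  move: C D; rewrite mulSn; clearbody i n; move: (n * (n - 1)) (i * k) => P Q; lia.
have allA : forall q, q < 2 -> forall j, j < k -> ab_omega ((i + q) * k + j) = La.
  move=> q qk j jk.
  move/permP: (Hb (i + q)) => /(_ (pred1 Lb)) Hc.
  have : count (pred1 Lb) (block k w_bad (i + q)) = 0.
    apply/eqP; rewrite -leqn0 leqNgt -has_count; apply/hasPn => x /mapP [y].
    rewrite mem_iota => /andP [_ yk] ->.
    have qk2 : q * k <= k by move: qk; clear; case: q => [|[|]]; rewrite ?mul0n ?mul1n.
    have E : (i + q) * k + y = i * k + q * k + y by rewrite mulnDl.
    have [t [Et tl]] : exists t, (i + q) * k + y = n * (n - 1) + t /\ t < n.
      exists ((i + q) * k + y - n * (n - 1)); rewrite E; move: Hi1 Hi2 qk2 yk.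
      rewrite /n; clearbody i; move: (3 * k * (3 * k - 1)) (i * k) (q * k) => P Q R; lia.
    rewrite Et w_bad_at ?tl //; rewrite /n; lia.
  rewrite Hc => /eqP; rewrite -leqn0 leqNgt -has_count => /hasPn /(_ (ab_omega ((i + q) * k + j))).
  move=> H; case E: (ab_omega ((i + q) * k + j)) => //.
  have : ~~ pred1 Lb (ab_omega ((i + q) * k + j)).
    apply: H; apply/mapP; exists j => //.
    by rewrite mem_iota; apply/andP; split => //.
  by rewrite E.
have h0 := allA 0 isT 0 k0.
have [k1|k1] : k = 1 \/ 1 < k by lia.
  have h1 := allA 1 isT 0 k0.
  move: h0 h1; rewrite /ab_omega k1 !muln1 !addn0 addn1 /=.
  by case: (odd i).
have h1 := allA 0 isT 1 k1.
move: h0 h1; rewrite /ab_omega !addn0 addn1 /=.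
by case: (odd _).
Qed.

Theorem mainTheorem14 :
  (forall w, lang A_ab w <-> w = ab_omega) /\
  ~ (exists C : automaton letter, forall w, J C w <-> Jbox A_ab w) /\
  Jbox A_ab ab_omega /\
  psi_equiv w_bad ab_omega /\
  ~ Jbox A_ab w_bad.
Proof.
have Jab : Jbox A_ab ab_omega.
  exists 1; split => //; exists ab_omega; split; last exact/lang_ab.
  by move=> i.
have Heq : psi_equiv w_bad ab_omega by apply: psi_unb; [exact: wbad_unb|exact: ab_unb].
split; first exact: lang_ab.
split.
  move=> [C HC]; apply: not_Jbox_bad; apply/HC.
  have [w' [E L]] := (proj2 (HC ab_omega)) Jab.
  exists w'; split => //; move=> c x; rewrite Heq; exact: E.
split => //; split => //; exact: not_Jbox_bad.
Qed.
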